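(* Let $K\ge1$ and $C\ge1$, and define for $t\in(0,1)$ $$H(t)={\rm th}\Big(\frac{C}{2}\max\{2\,{\rm arth}(t),(2\,{\rm arth}(t))^{1/K}\}\Big).$$ Then $H(t)\le C t^{1/K}$ for all $t\in(0,1)$, and thus $H$ is Hölder continuous with exponent $1/K$.
   Context: ${\rm th}$ and ${\rm arth}$ denote the hyperbolic tangent and its inverse. *)

(* Defs.v *)
From Stdlib Require Export Reals.
Open Scope R_scope.

Definition th (x : R) : R := (exp x - exp (- x)) / (exp x + exp (- x)).

Definition arth (t : R) : R := ln ((1 + t) / (1 - t)) / 2.

(* H(t) = th( C/2 * max{ 2 arth t, (2 arth t)^(1/K) } ), for t in (0,1);
   there 2 arth t > 0, so the real power Rpower is the usual one. *)
Definition H (K C t : R) : R :=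
  th (C / 2 * Rmax (2 * arth t) (Rpower (2 * arth t) (1 / K))).

(* Main.v *)
Require Import Defs.
From Coquelicot Require Import Coquelicot.
From Stdlib Require Import Reals Lra Psatz.
Open Scope R_scope.

Lemma mono (f df : R -> R) a b : a <= b ->
  (forall x, a <= x <= b -> is_derive f x (df x)) ->
  (forall x, a <= x <= b -> 0 <= df x) -> f a <= f b.
Proof.
intros hab hd hp.
destruct (MVT_gen f a b df) as [c [hc e]].
- intros x hx. apply hd. rewrite Rmin_left in hx by lra. rewrite Rmax_right in hx by lra. lra.
- intros x hx. rewrite Rmin_left in hx by lra. rewrite Rmax_right in hx by lra.
  apply continuity_pt_filterlim. apply (ex_derive_continuous (K:=R_AbsRing) (V:=R_NormedModule)). eexists; apply hd; lra.
- rewrite Rmin_left in hc by lra. rewrite Rmax_right in hc by lra.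
  assert (0 <= df c * (b - a)) by (apply Rmult_le_pos; [apply hp; lra| lra]). lra.
Qed.

Lemma EinvE E : 0 < E -> 2 <= E + / E.
Proof. intros h.
assert (E + / E - 2 = (E - 1) * (E - 1) / E) by (field; lra).
assert (0 <= (E - 1) * (E - 1) / E).
{ unfold Rdiv. apply Rmult_le_pos. apply (Rle_0_sqr (E-1)). apply Rlt_le, Rinv_0_lt_compat; lra. } lra. Qed.

Lemma S_pos z : 0 <= z -> 2 * z <= exp z - exp (- z).
Proof. intros hz.
assert (h := mono (fun z => exp z - exp (- z) - 2 * z) (fun z => exp z + exp (- z) - 2) 0 z hz).
simpl in h. rewrite Ropp_0, exp_0 in h.
assert (0 - 0 <= exp z - exp (- z) - 2 * z); [|lra].
replace (0 - 0) with (1 - 1 - 2 * 0) by ring. apply h.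
- intros x _. auto_derive; auto. ring.
- intros x _. rewrite exp_Ropp. assert (h1 := EinvE (exp x) (exp_pos x)). lra.
Qed.

Lemma th_E x : th x = (exp x - / exp x) / (exp x + / exp x).
Proof. unfold th. rewrite exp_Ropp. reflexivity. Qed.

Lemma th0 : th 0 = 0.
Proof. unfold th. rewrite Ropp_0, exp_0. field. Qed.

Lemma th_le x : 0 <= x -> th x <= x.
Proof. intros hx.
assert (h := mono (fun u => u - th u) (fun u => 1 - 4 / ((exp u + / exp u) * (exp u + / exp u))) 0 x hx).
simpl in h. rewrite th0 in h.
assert (0 - 0 <= x - th x); [|lra]. apply h.
- intros u _. unfold th. auto_derive.
  + assert (0 < exp u) by apply exp_pos. assert (0 < exp (- u)) by apply exp_pos. lra.
  + rewrite exp_Ropp. assert (0 < exp u) by apply exp_pos. field. split; [lra|]. assert (0 < exp u * exp u) by nra. lra.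
- intros v _. assert (h1 := EinvE (exp v) (exp_pos v)). set (D := exp v + / exp v) in *.
  assert (hD : 0 < D * D) by nra.
  assert (4 / (D * D) <= 1); [|lra].
  apply Rmult_le_reg_r with (D * D). exact hD.
  unfold Rdiv. rewrite Rmult_assoc, Rinv_l by lra. nra.
Qed.

Lemma conc x y : 0 < x <= y -> x * th y <= y * th x.
Proof. intros [hx hxy].
assert (h := mono (fun u => - (th u / u))
  (fun u => - ((u * 4 / ((exp u + / exp u) * (exp u + / exp u)) - th u) / (u * u))) x y hxy).
simpl in h.
assert (- (th x / x) <= - (th y / y)).
{ apply h.
  - intros u hu. unfold th. auto_derive.
    + assert (0 < exp u) by apply exp_pos. assert (0 < exp (- u)) by apply exp_pos. split; [lra|split; [lra|auto]].
    + rewrite exp_Ropp. assert (0 < exp u) by apply exp_pos. field. split; [lra|]. split; [|lra]. assert (0 < exp u * exp u) by nra. lra.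
  - intros u hu. assert (hE := exp_pos u). set (E := exp u) in *.
    assert (hS := S_pos (2 * u) ltac:(lra)).
    replace (exp (2 * u)) with (E * E) in hS by (unfold E; rewrite <- exp_plus; f_equal; ring).
    replace (exp (- (2 * u))) with (/ (E * E)) in hS by (unfold E; rewrite <- exp_plus, <- exp_Ropp; f_equal; ring).
    assert (hD : 0 < E + / E) by (assert (0 < / E) by (apply Rinv_0_lt_compat; lra); lra).
    assert (e : u * 4 / ((E + / E) * (E + / E)) - th u = (4 * u - (E * E - / (E * E))) / ((E + / E) * (E + / E))).
    { rewrite th_E. fold E. field. split; [lra|]. assert (0 < E * E) by nra. lra. }
    rewrite e.
    assert (hN : (4 * u - (E * E - / (E * E))) / ((E + / E) * (E + / E)) <= 0).
    { unfold Rdiv. assert (0 < / ((E + / E) * (E + / E))) by (apply Rinv_0_lt_compat; nra). nra. }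
    assert (hu2 : 0 < / (u * u)) by (apply Rinv_0_lt_compat; nra).
    unfold Rdiv at 1. set (N := (4 * u - (E * E - / (E * E))) / ((E + / E) * (E + / E))) in *.
    assert (N * / (u * u) <= 0). { nra. } lra. }
assert (th y / y <= th x / x) by lra.
assert (hy : 0 < y) by lra.
apply Rmult_le_compat_r with (r := x * y) in H0; [|nra].
replace (th y / y * (x * y)) with (x * th y) in H0 by (field; lra).
replace (th x / x * (x * y)) with (y * th x) in H0 by (field; lra).
exact H0.
Qed.

Lemma exp_le' x y : x <= y -> exp x <= exp y.
Proof. intros [h|h]. left; apply exp_increasing; exact h. subst; lra. Qed.

Lemma th_E2 x : th x = (exp (2 * x) - 1) / (exp (2 * x) + 1).
Proof. rewrite th_E. replace (2 * x) with (x + x) by ring. rewrite exp_plus.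
assert (0 < exp x) by apply exp_pos. field. split; [assert (0 < exp x * exp x) by nra; lra | lra]. Qed.

Lemma th_mono x y : x <= y -> th x <= th y.
Proof. intros h. rewrite !th_E2.
assert (h1 : exp (2 * x) <= exp (2 * y)) by (apply exp_le'; lra).
assert (hX := exp_pos (2 * x)). assert (hY := exp_pos (2 * y)).
set (X := exp (2 * x)) in *. set (Y := exp (2 * y)) in *.
assert (e : (Y - 1) / (Y + 1) - (X - 1) / (X + 1) = 2 * (Y - X) * / ((X + 1) * (Y + 1))) by (field; lra).
assert (0 < / ((X + 1) * (Y + 1))) by (apply Rinv_0_lt_compat; nra).
assert (0 <= 2 * (Y - X) * / ((X + 1) * (Y + 1))) by (apply Rmult_le_pos; lra). lra. Qed.

Lemma th_lt1 x : th x < 1.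
Proof. rewrite th_E2. assert (hX := exp_pos (2 * x)). set (X := exp (2 * x)) in *.
apply Rmult_lt_reg_r with (X + 1). lra. unfold Rdiv. rewrite Rmult_assoc, Rinv_l by lra. lra. Qed.

Lemma th_nonneg x : 0 <= x -> 0 <= th x.
Proof. intros h. rewrite <- th0. apply th_mono; exact h. Qed.

Lemma th_sub x y : th x - th y = th (x - y) * (1 - th x * th y).
Proof. rewrite !th_E2.
replace (exp (2 * (x - y))) with (exp (2 * x) * / exp (2 * y))
  by (rewrite <- exp_Ropp, <- exp_plus; f_equal; ring).
assert (hX := exp_pos (2 * x)). assert (hY := exp_pos (2 * y)).
set (X := exp (2 * x)) in *. set (Y := exp (2 * y)) in *.
field. repeat split; lra. Qed.


Lemma two_arth u : 2 * arth u = ln ((1 + u) / (1 - u)).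
Proof. unfold arth. field. Qed.

Lemma th_arth s : 0 < s < 1 -> th (arth s) = s.
Proof. intros hs. rewrite th_E2, two_arth, exp_ln.
- field. split; [lra|]. intro e. 
  assert ((1 + s) / (1 - s) + 1 = 2 / (1 - s)) by (field; lra).
  assert (0 < 2 / (1 - s)) by (unfold Rdiv; apply Rmult_lt_0_compat; [lra| apply Rinv_0_lt_compat; lra]). lra.
- unfold Rdiv; apply Rmult_lt_0_compat; [lra| apply Rinv_0_lt_compat; lra].
Qed.

Lemma arth_pos s : 0 < s < 1 -> 0 < 2 * arth s.
Proof. intros hs. rewrite two_arth. rewrite <- ln_1. apply ln_increasing. lra.
apply Rmult_lt_reg_r with (1 - s). lra. unfold Rdiv. rewrite Rmult_assoc, Rinv_l by lra. lra. Qed.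

Lemma arth_lt s t : 0 < s -> s < t -> t < 1 -> 2 * arth s < 2 * arth t.
Proof. intros. rewrite !two_arth. apply ln_increasing.
unfold Rdiv; apply Rmult_lt_0_compat; [lra| apply Rinv_0_lt_compat; lra].
assert (e : (1 + t) / (1 - t) - (1 + s) / (1 - s) = 2 * (t - s) * / ((1 - t) * (1 - s))) by (field; lra).
assert (0 < / ((1 - t) * (1 - s))) by (apply Rinv_0_lt_compat; nra).
assert (0 < 2 * (t - s) * / ((1 - t) * (1 - s))) by (apply Rmult_lt_0_compat; lra). lra. Qed.

Lemma arth_sub s t : 0 < s -> s < t -> t < 1 ->
  2 * arth t - 2 * arth s = 2 * arth ((t - s) / (1 - s * t)).
Proof. intros. rewrite !two_arth. rewrite <- ln_div.
- f_equal. assert (0 < 1 - s * t) by nra. field. repeat split; try lra. nra.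
- unfold Rdiv; apply Rmult_lt_0_compat; [lra| apply Rinv_0_lt_compat; lra].
- unfold Rdiv; apply Rmult_lt_0_compat; [lra| apply Rinv_0_lt_compat; lra].
Qed.

Lemma pw_le1 a p : 0 < a <= 1 -> 0 < p <= 1 -> a <= Rpower a p.
Proof. intros ha hp. unfold Rpower. rewrite <- (exp_ln a) at 1 by lra.
apply exp_le'. assert (ln a <= 0).
{ destruct (Rle_lt_or_eq_dec a 1) as [h|h]; [lra| |].
  - rewrite <- ln_1. left. apply ln_increasing; lra.
  - subst. rewrite ln_1. lra. }
nra. Qed.

Lemma pw_ge1 a p : 1 <= a -> 0 < p <= 1 -> Rpower a p <= a.
Proof. intros ha hp. rewrite <- (Rpower_1 a) at 2 by lra. apply Rle_Rpower; lra. Qed.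

Lemma pw_pos a p : 0 < Rpower a p.
Proof. unfold Rpower. apply exp_pos. Qed.

Lemma pw_neg_mono u v q : 0 < u <= v -> q <= 0 -> Rpower v q <= Rpower u q.
Proof. intros hu hq. unfold Rpower. apply exp_le'.
assert (ln u <= ln v) by (apply ln_le; lra). nra. Qed.

Lemma pw_sub a b p : 0 < b < a -> 0 < p <= 1 ->
  Rpower a p - Rpower b p <= Rpower (a - b) p.
Proof. intros hb hp.
assert (e : forall z, 0 < z -> Rpower z p = z * Rpower z (p - 1)).
{ intros z hz. replace p with (1 + (p - 1)) at 1 by ring. rewrite Rpower_plus, Rpower_1 by lra. reflexivity. }
rewrite (e a), (e b), (e (a - b)) by lra.
assert (h1 : Rpower a (p - 1) <= Rpower b (p - 1)) by (apply pw_neg_mono; lra).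
assert (h2 : Rpower a (p - 1) <= Rpower (a - b) (p - 1)) by (apply pw_neg_mono; lra).
assert (h3 := pw_pos a (p - 1)).
replace (a * Rpower a (p - 1)) with (b * Rpower a (p - 1) + (a - b) * Rpower a (p - 1)) by ring.
assert (b * Rpower a (p - 1) <= b * Rpower b (p - 1)) by (apply Rmult_le_compat_l; lra).
assert ((a - b) * Rpower a (p - 1) <= (a - b) * Rpower (a - b) (p - 1)) by (apply Rmult_le_compat_l; lra).
lra. Qed.

Definition G p a := Rmax a (Rpower a p).

Lemma G_ge a p : a <= G p a.
Proof. apply Rmax_l. Qed.

Lemma G_mono a b p : 0 < b <= a -> 0 < p -> G p b <= G p a.
Proof. intros hb hp. unfold G. apply Rmax_lub.
- apply Rle_trans with a; [lra| apply Rmax_l].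
- apply Rle_trans with (Rpower a p); [apply Rle_Rpower_l; lra| apply Rmax_r]. Qed.

Lemma G_sub a b p : 0 < b < a -> 0 < p <= 1 -> G p a - G p b <= G p (a - b).
Proof. intros hb hp. unfold G at 1. apply Rmax_case.
- assert (b <= G p b) by apply G_ge. assert (a - b <= G p (a - b)) by apply G_ge. lra.
- assert (Rpower b p <= G p b) by apply Rmax_r. assert (Rpower (a - b) p <= G p (a - b)) by apply Rmax_r.
  assert (h := pw_sub a b p hb hp). lra. Qed.

Lemma th_scale z C : 0 <= z -> 1 <= C -> th (C * z) <= C * th z.
Proof. intros hz hC. destruct (Rle_lt_or_eq_dec 0 z hz) as [h|h].
- assert (h1 := conc z (C * z) ltac:(nra)).
  apply Rmult_le_reg_l with z. lra. nra.
- subst. rewrite Rmult_0_r, th0. lra. Qed.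

Lemma HG K C t : H K C t = th (C / 2 * G (1 / K) (2 * arth t)).
Proof. reflexivity. Qed.

Lemma part1 K C t : 1 <= K -> 1 <= C -> 0 < t < 1 -> H K C t <= C * Rpower t (1 / K).
Proof. intros hK hC ht. rewrite HG.
assert (hp : 0 < 1 / K <= 1).
{ split. unfold Rdiv; apply Rmult_lt_0_compat; [lra| apply Rinv_0_lt_compat; lra].
  apply Rmult_le_reg_r with K. lra. unfold Rdiv. rewrite Rmult_assoc, Rinv_l by lra. lra. }
set (p := 1 / K) in *.
assert (ha := arth_pos t ht). set (a := 2 * arth t) in *.
assert (htt : th (a / 2) = t) by (unfold a; replace (2 * arth t / 2) with (arth t) by field; apply th_arth; exact ht).
destruct (Rle_lt_dec 1 a) as [h1|h1].
- unfold G. rewrite Rmax_left by (apply pw_ge1; lra).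
  replace (C / 2 * a) with (C * (a / 2)) by field.
  apply Rle_trans with (C * th (a / 2)). apply th_scale; lra.
  rewrite htt. apply Rmult_le_compat_l. lra. apply pw_le1; lra.
- unfold G. rewrite Rmax_right by (apply pw_le1; lra).
  assert (hap : a <= Rpower a p) by (apply pw_le1; lra).
  set (ap := Rpower a p) in *.
  replace (C / 2 * ap) with (C * (ap / 2)) by field.
  apply Rle_trans with (C * th (ap / 2)). apply th_scale; lra.
  apply Rmult_le_compat_l. lra.
  assert (hc := conc (a / 2) (ap / 2) ltac:(lra)). rewrite htt in hc.
  assert (htl : t <= a / 2) by (rewrite <- htt; apply th_le; lra).
  assert (ht0 : 0 < t) by lra.
  set (q := t / a).
  assert (hq : 0 < q <= 1).
  { unfold q. split. unfold Rdiv; apply Rmult_lt_0_compat; [lra| apply Rinv_0_lt_compat; lra].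
    apply Rmult_le_reg_r with a. lra. unfold Rdiv. rewrite Rmult_assoc, Rinv_l by lra. lra. }
  assert (hqq := pw_le1 q p hq hp).
  assert (e : Rpower t p = ap * Rpower q p).
  { unfold ap. rewrite Rpower_mult_distr by lra. f_equal. unfold q. field. lra. }
  rewrite e.
  assert (th (ap / 2) <= ap * q).
  { unfold q. apply Rmult_le_reg_l with (a / 2). lra.
    replace (a / 2 * (ap * (t / a))) with (ap / 2 * t) by (field; lra). exact hc. }
  assert (0 < ap) by (unfold ap; apply pw_pos).
  assert (ap * q <= ap * Rpower q p) by (apply Rmult_le_compat_l; lra). lra.
Qed.

Lemma part2 K C s t : 1 <= K -> 1 <= C -> 0 < s -> s < t -> t < 1 ->
  H K C t - H K C s <= 2 * C * Rpower (t - s) (1 / K) /\ H K C s <= H K C t.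
Proof. intros hK hC hs hst ht. rewrite !HG.
assert (hp : 0 < 1 / K <= 1).
{ split. unfold Rdiv; apply Rmult_lt_0_compat; [lra| apply Rinv_0_lt_compat; lra].
  apply Rmult_le_reg_r with K. lra. unfold Rdiv. rewrite Rmult_assoc, Rinv_l by lra. lra. }
assert (hw := part1 K C ((t - s) / (1 - s * t)) hK hC).
rewrite HG in hw.
set (p := 1 / K) in *.
assert (hb := arth_pos s ltac:(lra)). assert (hab := arth_lt s t hs hst ht).
assert (hsub := arth_sub s t hs hst ht).
set (w := (t - s) / (1 - s * t)) in *.
assert (hst1 : 0 < 1 - s * t) by nra.
assert (hw1 : 0 < w < 1).
{ unfold w. split. unfold Rdiv; apply Rmult_lt_0_compat; [lra| apply Rinv_0_lt_compat; lra].
  apply Rmult_lt_reg_r with (1 - s * t). lra. unfold Rdiv. rewrite Rmult_assoc, Rinv_l by lra. nra. }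
specialize (hw hw1).
set (a := 2 * arth t) in *. set (b := 2 * arth s) in *.
set (x := C / 2 * G p a). set (y := C / 2 * G p b).
assert (hGm := G_mono a b p ltac:(lra) ltac:(lra)).
assert (hyx : y <= x) by (unfold x, y; apply Rmult_le_compat_l; lra).
assert (hGs := G_sub a b p ltac:(lra) hp).
assert (hxy : x - y <= C / 2 * G p (2 * arth w)).
{ rewrite <- hsub. unfold x, y. fold a b. assert (0 <= C / 2) by lra. 
  assert (C / 2 * (G p a - G p b) <= C / 2 * G p (a - b)) by (apply Rmult_le_compat_l; lra). lra. }
assert (hth1 : th (x - y) <= C * Rpower w p).
{ apply Rle_trans with (th (C / 2 * G p (2 * arth w))). apply th_mono; exact hxy. exact hw. }
assert (hth0 : 0 <= th (x - y)) by (apply th_nonneg; lra).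
assert (hys : s <= th y).
{ rewrite <- (th_arth s) by lra. apply th_mono. unfold y.
  assert (b <= G p b) by apply G_ge. assert (arth s = b / 2) by (unfold b; field). rewrite H0.
  assert (b / 2 <= 1 / 2 * G p b) by lra.
  assert (1 / 2 * G p b <= C / 2 * G p b) by (apply Rmult_le_compat_r; lra). lra. }
assert (hthm : th y <= th x) by (apply th_mono; exact hyx).
assert (hx1 := th_lt1 x).
assert (hfac : 1 - th x * th y <= Rpower (1 - s * t) p * 2).
{ assert (1 - s <= Rpower (1 - s) p) by (apply pw_le1; lra).
  assert (Rpower (1 - s) p <= Rpower (1 - s * t) p) by (apply Rle_Rpower_l; nra).
  assert (0 <= th y) by lra. nra. }
assert (hfac0 : 0 <= 1 - th x * th y) by nra.
split.
- rewrite th_sub.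
  apply Rle_trans with (C * Rpower w p * (Rpower (1 - s * t) p * 2)).
  apply Rmult_le_compat; assumption.
  replace (C * Rpower w p * (Rpower (1 - s * t) p * 2)) with (2 * C * (Rpower w p * Rpower (1 - s * t) p)) by ring.
  rewrite Rpower_mult_distr by lra. unfold w. replace ((t - s) / (1 - s * t) * (1 - s * t)) with (t - s) by (field; lra). lra.
- apply th_mono; exact hyx.
Qed.

Theorem theorem5p3 (K C : R) (hK : 1 <= K) (hC : 1 <= C) :
  (forall t : R, 0 < t < 1 -> H K C t <= C * Rpower t (1 / K))
  /\
  (exists M : R, forall s t : R, 0 < s < 1 -> 0 < t < 1 ->
      Rabs (H K C s - H K C t) <= M * Rpower (Rabs (s - t)) (1 / K)).
Proof.
split.
- intros t ht. apply part1; assumption.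
- exists (2 * C). intros s t hs ht.
  destruct (Rtotal_order s t) as [h|[h|h]].
  + destruct (part2 K C s t hK hC ltac:(lra) h ltac:(lra)) as [h1 h2].
    rewrite Rabs_minus_sym, Rabs_right by lra. rewrite (Rabs_minus_sym s t), (Rabs_right (t - s)) by lra. exact h1.
  + subst. replace (H K C t - H K C t) with 0 by ring. rewrite Rabs_R0.
    assert (0 < Rpower (Rabs (t - t)) (1 / K)) by apply pw_pos. nra.
  + destruct (part2 K C t s hK hC ltac:(lra) h ltac:(lra)) as [h1 h2].
    rewrite Rabs_right by lra. rewrite (Rabs_right (s - t)) by lra. exact h1.
Qed.
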